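(* Let $N$ be the coarse-grained compartment model with internal chemistry $0\to S$ (rate constant $\kappa_b\ge0$), $S\to0$ (rate constant $\kappa_d\ge0$), compartment parameters $\kappa_I,\kappa_E,\kappa_F,\kappa_C\ge0$, inflow distribution $\mu$ on $\mathbb Z_{\ge0}$ with $\lambda:=\sum_xx\mu(x)<\infty$, and arbitrary fragmentation kernel $\psi$. If $(\kappa_F-\kappa_E)\kappa_b>(\kappa_E+\kappa_d)\kappa_E$, $\kappa_I>0$ and $\kappa_C=0$, then all states are transient for $N$.
   Context: The state space of $N$ is $\mathcal N=\{n:\mathbb Z_{\ge0}\to\mathbb Z_{\ge0}\text{ finitely supported}\}$, where $n_x$ is the number of compartments containing exactly $x$ molecules of $S$; $e_x$ is the indicator of $x$. The kernel $\psi$ satisfies $\psi(x,y)=0$ for $y>x$ and $y\mapsto\psi(x,y)$ is a probability measure for each $x$. $N$ is the continuous-time Markov chain with generator $\mathcal LV(n)=\sum_{x=0}^\infty\Big[\kappa_bn_x\big(V(n-e_x+e_{x+1})-V(n)\big)+\kappa_dn_xx\big(V(n-e_x+e_{x-1})-V(n)\big)+\kappa_I\mu(x)\big(V(n+e_x)-V(n)\big)+\kappa_En_x\big(V(n-e_x)-V(n)\big)+\kappa_Fxn_x\sum_{y=0}^\infty\psi(x,y)\big(V(n-e_x+e_y+e_{x-y})-V(n)\big)+\kappa_C\binom{n_x}2\big(V(n-2e_x+e_{2x})-V(n)\big)+\sum_{y\ne x}\kappa_C\frac{n_xn_y}2\big(V(n-e_x-e_y+e_{x+y})-V(n)\big)\Big]$.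 *)

(* Defs.v *)
From HB Require Import structures.
From mathcomp Require Import all_boot all_order all_algebra.
From mathcomp Require Import all_classical all_reals all_analysis.
Set Implicit Arguments. Unset Strict Implicit. Unset Printing Implicit Defensive.
Import Order.TTheory GRing.Theory Num.Theory.
Local Open Scope ring_scope.

(* States: functions n : nat -> nat (n x = number of compartments with x
   molecules); the state space of the model is the set of finitely supported
   ones. *)
Definition fin_supp (n : nat -> nat) : Prop :=
  finite_set [set x | n x != 0%N].

Definition move (n : nat -> nat) (a b : nat) : nat -> nat :=
  fun z => (n z - (z == a) + (z == b))%N.
Definition add1 (n : nat -> nat) (a : nat) : nat -> nat :=
  fun z => (n z + (z == a))%N.
Definition sub1 (n : nat -> nat) (a : nat) : nat -> nat :=
  fun z => (n z - (z == a))%N.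
Definition frag (n : nat -> nat) (x y : nat) : nat -> nat :=
  fun z => (n z - (z == x) + (z == y) + (z == x - y))%N.
Definition coal2 (n : nat -> nat) (x : nat) : nat -> nat :=
  fun z => (n z - 2 * (z == x) + (z == x.*2))%N.
Definition coal (n : nat -> nat) (x y : nat) : nat -> nat :=
  fun z => (n z - (z == x) - (z == y) + (z == x + y))%N.

Local Open Scope ereal_scope.

(* rate_sum V n = sum over all transitions n -> m of (rate) * V m, read off
   literally from the generator L (so that L V n = rate_sum V n - q(n) V n,
   with q(n) = rate_sum 1 n the total jump rate). *)
Definition rate_sum {R : realType} (kb kd kI kE kF kC : R) (mu : nat -> R)
  (psi : nat -> nat -> R) (V : (nat -> nat) -> \bar R) (n : nat -> nat)
  : \bar R :=
  \sum_(0 <= x <oo)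
   ( (kb * (n x)%:R)%:E * V (move n x x.+1)
   + (kd * (n x)%:R * x%:R)%:E * V (move n x x.-1)
   + (kI * mu x)%:E * V (add1 n x)
   + (kE * (n x)%:R)%:E * V (sub1 n x)
   + (kF * x%:R * (n x)%:R)%:E *
        \sum_(0 <= y <oo) ((psi x y)%:E * V (frag n x y))
   + (kC * ('C(n x, 2))%:R)%:E * V (coal2 n x)
   + \sum_(0 <= y <oo)
        (if y == x then 0
         else (kC * (n x)%:R * (n y)%:R / 2)%:E * V (coal n x y))).

Definition total_rate {R : realType} kb kd kI kE kF kC (mu : nat -> R) psi
  (n : nat -> nat) : \bar R :=
  rate_sum kb kd kI kE kF kC mu psi (fun _ => 1) n.

(* One step of the embedded jump chain: expectation of V after one jump
   from n (absorbing if the total rate vanishes). *)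
Definition jump {R : realType} kb kd kI kE kF kC (mu : nat -> R) psi
  (V : (nat -> nat) -> \bar R) (n : nat -> nat) : \bar R :=
  if total_rate kb kd kI kE kF kC mu psi n == 0 then V n
  else rate_sum kb kd kI kE kF kC mu psi V n *
         ((fine (total_rate kb kd kI kE kF kC mu psi n))^-1)%:E.

(* hit i k m = probability that the jump chain started at m visits i
   within k steps (first-step recursion). *)
Fixpoint hit {R : realType} kb kd kI kE kF kC (mu : nat -> R) psi
  (i : nat -> nat) (k : nat) (m : nat -> nat) : \bar R :=
  match k with
  | 0%N => if `[< m = i >] then 1 else 0
  | k'.+1 => if `[< m = i >] then 1
             else jump kb kd kI kE kF kC mu psi
                    (hit kb kd kI kE kF kC mu psi i k') m
  end.

(* probability of returning to i within k+1 jumps, starting from i *)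
Definition ret {R : realType} kb kd kI kE kF kC (mu : nat -> R) psi
  (i : nat -> nat) (k : nat) : \bar R :=
  jump kb kd kI kE kF kC mu psi (hit kb kd kI kE kF kC mu psi i k) i.

Definition transient {R : realType} kb kd kI kE kF kC (mu : nat -> R) psi
  (i : nat -> nat) : Prop :=
  ereal_sup (range (ret kb kd kI kE kF kC mu psi i)) < 1.

(* Main.v *)
Require Import Defs.
From HB Require Import structures.
From mathcomp Require Import all_boot all_order all_algebra.
From mathcomp Require Import all_classical all_reals all_analysis.
From mathcomp Require Import ring lra.
Import Order.TTheory GRing.Theory Num.Theory.
Set Implicit Arguments. Unset Strict Implicit. Unset Printing Implicit Defensive.
Local Open Scope classical_set_scope.
Local Open Scope ring_scope.

Lemma seq_bound (s : seq nat) : exists b, forall x, x \in s -> (x < b)%N.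
Proof.
elim: s => [|a s [b Hb]]; first by exists 0%N.
exists (maxn a.+1 b) => x; rewrite inE => /orP[/eqP->|/Hb xb].
  by rewrite leq_max leqnn.
by rewrite leq_max xb orbT.
Qed.

Lemma supp_bound n : fin_supp n -> exists b, forall x, (b <= x)%N -> n x = 0%N.
Proof.
move=> /finite_seqP[s Hs]; have [b Hb] := seq_bound s.
exists b => x bx; apply/eqP; apply: contraT => nx.
have : [set x | n x != 0%N] x by [].
rewrite Hs /= => /Hb; by rewrite ltnNge bx.
Qed.

Lemma fin_supp_le n m a b : fin_supp n ->
  (forall z, (m z <= n z + (z == a) + (z == b))%N) -> fin_supp m.
Proof.
move=> fn H; rewrite /fin_supp.
apply: (@sub_finite_set _ _ ([set x | n x != 0%N] `|` ([set a] `|` [set b]))).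
  move=> z /= mz; have := H z.
  case: (eqVneq z a) => [->|za]; first by right; left.
  case: (eqVneq z b) => [->|zb]; first by right; right.
  rewrite !addn0 => h; left; apply: contra mz => /eqP n0.
  by rewrite -leqn0 -n0.
by rewrite !finite_setU; split => //; split; apply: finite_set1.
Qed.

Lemma fs_add1 n a : fin_supp n -> fin_supp (add1 n a).
Proof. by move=> f; apply: (@fin_supp_le n _ a a f) => z; rewrite /add1 leq_addr. Qed.
Lemma fs_sub1 n a : fin_supp n -> fin_supp (sub1 n a).
Proof. move=> f; apply: (@fin_supp_le n _ a a f) => z; rewrite /sub1.
by apply: leq_trans (leq_subr _ _) _; rewrite -addnA leq_addr. Qed.
Lemma fs_move n a b : fin_supp n -> fin_supp (move n a b).
Proof. by move=> f; apply: fs_add1; apply: fs_sub1. Qed.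
Lemma fs_frag n x y : fin_supp n -> fin_supp (frag n x y).
Proof. by move=> f; apply: fs_add1; apply: fs_add1; apply: fs_sub1. Qed.
Lemma fs_coal2 n x : fin_supp n -> fin_supp (coal2 n x).
Proof. move=> f; apply: (@fin_supp_le n _ x.*2 x.*2 f) => z; rewrite /coal2.
by rewrite -addnA; apply: leq_add (leq_subr _ _) (leq_addr _ _). Qed.
Lemma fs_coal n x y : fin_supp n -> fin_supp (coal n x y).
Proof. move=> f; apply: (@fin_supp_le n _ (x + y) (x+y) f) => z; rewrite /coal.
rewrite -addnA; apply: leq_add (leq_trans (leq_subr _ _) (leq_subr _ _)) (leq_addr _ _). Qed.

Section Lyap.
Variable R : realType.
Variables s c : R.
Hypotheses (s0 : 0 < s) (c0 : 0 < c).

Definition th (x : nat) : R := s / (1 + c * x%:R).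

Lemma th_gt0 x : 0 < th x.
Proof. by rewrite /th divr_gt0 // ltr_pwDl // mulr_ge0 // ltW. Qed.

Definition bnd (n : nat -> nat) : nat :=
  get (fun b : nat => forall x, (b <= x)%N -> n x = 0%N).

Definition V (n : nat -> nat) : R := \prod_(0 <= x < bnd n) th x ^+ n x.

Lemma V_gt0 n : 0 < V n.
Proof. by rewrite /V; apply: prodr_gt0 => x _; rewrite exprn_gt0 // th_gt0. Qed.

Lemma prod_ext n b b' : (forall x, (b <= x)%N -> n x = 0%N) -> (b <= b')%N ->
  \prod_(0 <= x < b') th x ^+ n x = \prod_(0 <= x < b) th x ^+ n x.
Proof.
move=> H bb; rewrite (@big_cat_nat _ _ _ b 0 b' _ _ (leq0n b) bb) /= -[RHS]mulr1; congr (_ * _).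
by rewrite big_nat_cond big1 // => x /andP[/andP[bx _] _]; rewrite H.
Qed.

Lemma V_eq n b : fin_supp n -> (forall x, (b <= x)%N -> n x = 0%N) ->
  V n = \prod_(0 <= x < b) th x ^+ n x.
Proof.
move=> /supp_bound ex H.
have Hb : forall x, (bnd n <= x)%N -> n x = 0%N by apply: (getPex ex).
rewrite /V -(prod_ext Hb (leq_maxl (bnd n) b)) (prod_ext H) // ?leq_maxr //.
Qed.

Lemma V_add1 n a : fin_supp n -> V (add1 n a) = V n * th a.
Proof.
move=> fn; have [b Hb] := supp_bound fn.
pose b' := maxn b a.+1.
have Hb' : forall x, (b' <= x)%N -> n x = 0%N.
  by move=> x; rewrite geq_max => /andP[/Hb].
have Hb'' : forall x, (b' <= x)%N -> add1 n a x = 0%N.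
  move=> x; rewrite geq_max => /andP[bx ax]; rewrite /add1 Hb //.
  by case: eqP ax => // ->; rewrite ltnn.
rewrite (V_eq fn Hb') (V_eq (fs_add1 a fn) Hb'').
rewrite /add1; under eq_bigr do rewrite exprD.
rewrite big_split /=; congr (_ * _).
rewrite (eq_bigr (fun x => if x == a then th a else 1)); last first.
  by move=> x _; case: eqP => [->|]; rewrite ?expr1 ?expr0.
rewrite -big_mkcond big_nat1_eq /=.
by rewrite /b' leq_max ltnSn orbT.
Qed.

Lemma add1_sub1 n a : (0 < n a)%N -> add1 (sub1 n a) a = n.
Proof.
move=> na; apply/funext => z; rewrite /add1 /sub1.
by case: eqP => [->|] //=; rewrite ?subn0 ?addn0 // subnK.
Qed.

Lemma V_sub1 n a : fin_supp n -> (0 < n a)%N -> V (sub1 n a) * th a = V n.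
Proof. by move=> f na; rewrite -(V_add1 _ (fs_sub1 a f)) add1_sub1. Qed.

Lemma V_move n a b : fin_supp n -> (0 < n a)%N ->
  V (move n a b) * th a = V n * th b.
Proof.
move=> f na; rewrite (_ : move n a b = add1 (sub1 n a) b) //.
by rewrite (V_add1 _ (fs_sub1 a f)) mulrAC V_sub1.
Qed.

Lemma V_frag n x y : fin_supp n -> (0 < n x)%N ->
  V (frag n x y) * th x = V n * (th y * th (x - y)).
Proof.
move=> f na; rewrite (_ : frag n x y = add1 (add1 (sub1 n x) y) (x - y)) //.
rewrite (V_add1 _ (fs_add1 y (fs_sub1 x f))) (V_add1 _ (fs_sub1 x f)).
rewrite -(V_sub1 f na); ring.
Qed.

End Lyap.
Lemma exists_k (R : realType) (kb kd kE kF : R) :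
  0 <= kb -> 0 <= kd -> 0 <= kE -> 0 <= kF ->
  (kE + kd) * kE < (kF - kE) * kb ->
  exists k, [/\ 0 < k, kE < kb * k & (kE + kd) * k + kE < kF].
Proof.
move=> kb0 kd0 kE0 kF0 hcond.
have kbp : 0 < kb.
  rewrite lt_def kb0 andbT; apply/eqP => kb00; move: hcond; rewrite kb00 mulr0.
  have : 0 <= (kE + kd) * kE by apply: mulr_ge0 => //; apply: addr_ge0.
  by move=> h1 h2; have := lt_le_trans h2 h1; rewrite ltxx.
pose D := (kF - kE) * kb - (kE + kd) * kE.
have Dp : 0 < D by rewrite subr_gt0.
have e1 : 0 < kE + kd + 1 by lra.
pose t := D / (kE + kd + 1).
have tp : 0 < t by rewrite divr_gt0.
have te : t * (kE + kd + 1) = D by rewrite /t mulfVK // gt_eqF.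
exists ((kE + t) / kb); split.
- by rewrite divr_gt0 // ltr_pwDr.
- by rewrite mulrC divfK ?gt_eqF // ltrDl.
- rewrite -(ltr_pM2r kbp) mulrDl -mulrA divfK ?gt_eqF //.
  rewrite /D in te; clearbody t; nra.
Qed.

Lemma exists_p (R : realType) (kb kd kE kF k : R) :
  0 <= kb -> 0 <= kd -> 0 <= kE -> 0 <= kF ->
  0 < k -> kE < kb * k -> (kE + kd) * k + kE < kF ->
  exists p, [/\ 0 < p, p <= 1/2, p * (kE * k + kE + (kb * k - kE)) <= kb * k - kE
     & kF * p <= kF - kE - (kE + kd) * k].
Proof.
move=> kb0 kd0 kE0 kF0 k0 h1 h2.
pose a := kb * k - kE. pose m := kF - kE - (kE + kd) * k.
have ap : 0 < a by rewrite subr_gt0.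
have mp : 0 < m by rewrite /m; lra.
have kEk : 0 <= kE * k + kE by rewrite addr_ge0 // mulr_ge0 // ltW.
pose Q := 2 + (kE * k + kE + a) / a + kF / m.
have q1 : 0 <= (kE * k + kE + a) / a by apply: divr_ge0; lra.
have q2 : 0 <= kF / m by apply: divr_ge0; lra.
have Qp : 0 < Q by rewrite /Q; lra.
exists Q^-1; split.
- by rewrite invr_gt0.
- rewrite mul1r lef_pV2 ?posrE //.
  rewrite /Q; lra.
- rewrite -/a mulrC ler_pdivrMr //.
  have hX : (kE * k + kE + a) / a * a = kE * k + kE + a by rewrite divfK // gt_eqF.
  have : 0 <= kF / m * a by rewrite mulr_ge0 // ltW.
  rewrite /Q; clearbody a m; nra.
- rewrite -/m ler_pdivrMr //.
  have hX : kF / m * m = kF by rewrite divfK // gt_eqF.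
  have : 0 <= (kE * k + kE + a) / a * m by rewrite mulr_ge0 // ltW.
  rewrite /Q; clearbody a m; nra.
Qed.
Lemma G_le0 (R : realType) (kb kd kE kF s c P : R) (x : nat) :
 0 <= kb -> 0 <= kd -> 0 <= kE -> 0 <= kF -> 0 < s -> s < 1 -> 0 < c ->
 kE * (1 - s) * (1 + c) <= kb * c * s ->
 kE * c + kd * c * s + kE * (1 - s) <= kF * (1 - s) * s ->
 P <= s * th s c x ->
 kb * (th s c x.+1 - th s c x) + kd * x%:R * (th s c x.-1 - th s c x)
   + kE * (1 - th s c x) + kF * x%:R * (P - th s c x) <= 0.
Proof.
move=> kb0 kd0 kE0 kF0 s0 s1 c0 h0 h1 hP.
case: x hP => [|k] hP.
  rewrite /th !mulr0 !addr0 divr1 subrr !mulr0 addr0.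
  have c1 : 0 < 1 + c by lra.
  have e : kb * (s / (1 + c * 1) - s) = - (kb * c * s / (1 + c)).
    rewrite mulr1; field; lra.
  rewrite e mul0r addr0.
  have : kE * (1 - s) <= kb * c * s / (1 + c) by rewrite ler_pdivlMr.
  lra.
set X : R := k.+1%:R.
have X1 : 1 <= X by rewrite /X ler1n.
set D := 1 + c * X.
have Dp : 0 < D by rewrite /D; nra.
have tD : th s c k.+1 * D = s by rewrite /th divfK // gt_eqF.
have Dc : D - c = 1 + c * k%:R by rewrite /D /X -addn1 natrD; ring.
have D1 : 0 < 1 + c * k%:R by rewrite ltr_pwDl ?mulr_ge0 // ltW.
have tmE : th s c k * (D - c) = s by rewrite Dc /th divfK // gt_eqF.
have tms : th s c k <= s.
  rewrite /th ler_pdivrMr //; have : 0 <= c * k%:R by rewrite mulr_ge0 // ltW.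
  nra.
have tm0 : 0 <= th s c k by rewrite /th divr_ge0 ?ltW.
have t1 : th s c k.+2 <= th s c k.+1.
  rewrite /th ler_pdivrMr; last by rewrite ltr_pwDl ?mulr_ge0 // ltW.
  rewrite mulrAC ler_pdivlMr // ler_pM2l // lerD2l ler_pM2l // ler_nat //.
have PD : P * D <= s * s by have := ler_wpM2r (ltW Dp) hP; rewrite -mulrA tD.
rewrite -/X /=.
have kbt : kb * (th s c k.+2 - th s c k.+1) <= 0.
  by rewrite mulr_ge0_le0 // subr_le0.
suff : D * (kd * X * (th s c k - th s c k.+1) + kE * (1 - th s c k.+1) +
    kF * X * (P - th s c k.+1)) <= 0.
  rewrite pmulr_rle0 // => h; lra.
have eS : D * (kd * X * (th s c k - th s c k.+1) + kE * (1 - th s c k.+1) +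
    kF * X * (P - th s c k.+1)) = kd * X * (th s c k * (D - c) + th s c k * c - th s c k.+1 * D)
    + kE * (D - th s c k.+1 * D) + kF * X * (P * D - th s c k.+1 * D) by ring.
rewrite eS tD tmE.
have X0 : 0 <= X by lra.
have f1 : kd * X * (th s c k * c) <= kd * X * (s * c).
  by rewrite ler_wpM2l ?mulr_ge0 // ler_wpM2r // ltW.
have f2 : kF * X * (P * D - s) <= kF * X * (s * s - s).
  by rewrite ler_wpM2l ?mulr_ge0 // lerD2r.
have f3 : X * (kE * c + kd * c * s + kE * (1 - s)) <= X * (kF * (1 - s) * s).
  by rewrite ler_wpM2l.
have f4 : kE * (1 - s) * 1 <= kE * (1 - s) * X.
  by rewrite ler_wpM2l // mulr_ge0 // subr_ge0 ltW.
rewrite /D in f2 *.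
clearbody X; nra.
Qed.
Lemma eseries_fin (R : realType) (f : nat -> R) N : (forall y, 0 <= f y) ->
  (forall y, (N <= y)%N -> f y = 0) ->
  (\sum_(0 <= y <oo) (f y)%:E = (\sum_(0 <= y < N) f y)%:E)%E.
Proof.
move=> f0 fN; rewrite (@nneseries_split _ _ 0 N); last by move=> k _; rewrite lee_fin.
rewrite add0n eseries0 ?adde0 ?sumEFin // => i Ni _; by rewrite fN.
Qed.

Section Gen.
Variable R : realType.
Variables (kb kd kI kE kF kC : R) (mu : nat -> R) (psi : nat -> nat -> R).
Hypotheses (kb0 : 0 <= kb) (kd0 : 0 <= kd) (kI0 : 0 <= kI) (kE0 : 0 <= kE)
  (kF0 : 0 <= kF) (kC0 : 0 <= kC) (mu0 : forall x, 0 <= mu x)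
  (psi0 : forall x y, 0 <= psi x y).

Local Open Scope ereal_scope.

Definition T (V : (nat -> nat) -> \bar R) (n : nat -> nat) (x : nat) : \bar R :=
   ( (kb * (n x)%:R)%:E * V (move n x x.+1)
   + (kd * (n x)%:R * x%:R)%:E * V (move n x x.-1)
   + (kI * mu x)%:E * V (add1 n x)
   + (kE * (n x)%:R)%:E * V (sub1 n x)
   + (kF * x%:R * (n x)%:R)%:E *
        \sum_(0 <= y <oo) ((psi x y)%:E * V (frag n x y))
   + (kC * ('C(n x, 2))%:R)%:E * V (coal2 n x)
   + \sum_(0 <= y <oo)
        (if y == x then 0
         else (kC * (n x)%:R * (n y)%:R / 2)%:E * V (coal n x y))).

Lemma rate_sumE V n : rate_sum kb kd kI kE kF kC mu psi V n = \sum_(0 <= x <oo) T V n x.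
Proof. by []. Qed.

Lemma T_ge0 V n x : (forall m, 0 <= V m) -> 0 <= T V n x.
Proof.
move=> V0; rewrite /T.
have r0 r : (0 <= r)%R -> forall m, 0 <= r%:E * V m by move=> ? m; rewrite mule_ge0.
repeat apply: adde_ge0; rewrite ?r0 ?mulr_ge0 //.
- by rewrite mule_ge0 // ?lee_fin ?mulr_ge0 // nneseries_ge0 // => y _ _; rewrite r0.
- apply: nneseries_ge0 => y _ _; case: ifP => // _; rewrite r0 //.
  by rewrite divr_ge0 // !mulr_ge0.
Qed.

Lemma T_mono V1 V2 n x : (forall m, 0 <= V1 m) ->
  (forall m, fin_supp m -> V1 m <= V2 m) -> fin_supp n -> T V1 n x <= T V2 n x.
Proof.
move=> V0 V12 fn; rewrite /T.
have r0 r : (0 <= r)%R -> forall m, fin_supp m -> r%:E * V1 m <= r%:E * V2 m.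
  by move=> ? m fm; rewrite lee_wpmul2l ?lee_fin // V12.
repeat apply: leeD.
- by apply: r0; [rewrite mulr_ge0 | apply: fs_move].
- by apply: r0; [rewrite !mulr_ge0 | apply: fs_move].
- by apply: r0; [rewrite mulr_ge0 | apply: fs_add1].
- by apply: r0; [rewrite mulr_ge0 | apply: fs_sub1].
- apply: lee_wpmul2l; first by rewrite lee_fin !mulr_ge0.
  apply: lee_nneseries; first by move=> y _ _; rewrite mule_ge0 ?lee_fin.
  by move=> y _; apply: r0 => //; apply: fs_frag.
- by apply: r0; [rewrite mulr_ge0 | apply: fs_coal2].
- apply: lee_nneseries.
    move=> y _ _; case: ifP => // _; rewrite mule_ge0 //.
    by rewrite lee_fin divr_ge0 // !mulr_ge0.
  move=> y _; case: ifP => // _; apply: r0; last exact: fs_coal.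
  by rewrite divr_ge0 // !mulr_ge0.
Qed.

Lemma T_real (w : (nat -> nat) -> R) n x : kC = 0%R ->
  (forall x y, (x < y)%N -> psi x y = 0%R) -> (forall m, (0 <= w m)%R) ->
  T (fun m => (w m)%:E) n x =
  (kb * (n x)%:R * w (move n x x.+1) + kd * (n x)%:R * x%:R * w (move n x x.-1)
   + kI * mu x * w (add1 n x) + kE * (n x)%:R * w (sub1 n x)
   + kF * x%:R * (n x)%:R * \sum_(0 <= y < x.+1) (psi x y * w (frag n x y)))%:E.
Proof.
move=> hC psiz w0; rewrite /T hC.
rewrite (@eseries_fin _ (fun y => (psi x y * w (frag n x y))%R) x.+1); last 2 first.
- by move=> y; rewrite mulr_ge0.
- by move=> y xy; rewrite psiz ?mul0r.
rewrite mul0r mul0e adde0.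
rewrite eseries0 ?adde0 //.
by move=> y _ _; rewrite !mul0r mul0e if_same.
Qed.

End Gen.
Lemma th_le (R : realType) (s c : R) x : 0 < s -> 0 < c -> th s c x <= s.
Proof.
move=> s0 c0; rewrite /th ler_pdivrMr; last by rewrite ltr_pwDl ?mulr_ge0 // ltW.
have : 0 <= c * x%:R by rewrite mulr_ge0 // ltW.
nra.
Qed.




Lemma th_prod (R : realType) (s c : R) x y : 0 < s -> 0 < c -> (y <= x)%N ->
  th s c y * th s c (x - y) <= s * th s c x.
Proof.
move=> s0 c0 yx; rewrite /th natrB //.
set Y := y%:R. set X := x%:R.
have YX : Y <= X by rewrite ler_nat.
have Y0 : 0 <= Y by rewrite ler0n.
have h1 : 0 < 1 + c * Y by rewrite ltr_pwDl ?mulr_ge0 // ltW.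
have h2 : 0 < 1 + c * (X - Y) by rewrite ltr_pwDl ?mulr_ge0 ?subr_ge0 // ltW.
have h3 : 0 < 1 + c * X by have := le_trans Y0 YX; nra.
have -> : s / (1 + c * Y) * (s / (1 + c * (X - Y))) = s * s / ((1 + c * Y) * (1 + c * (X - Y))).
  by field; rewrite !gt_eqF.
rewrite -mulrA ler_pM2l // ler_pdivrMr ?mulr_gt0 //.
rewrite mulrAC ler_pdivlMr //.
have : 0 <= c * Y * (c * (X - Y)) by rewrite mulr_ge0 // mulr_ge0 ?subr_ge0 // ltW.
nra.
Qed.

Lemma term_ineq (R : realType) (kb kd kI kE kF s c a Vn Vmp Vmm Va Vs mux : R)
  (psi : nat -> R) (Vf : nat -> R) (N x : nat) :
  0 <= kb -> 0 <= kd -> 0 <= kI -> 0 <= kE -> 0 <= kF ->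
  0 < s -> s < 1 -> 0 < c ->
  kE * (1 - s) * (1 + c) <= kb * c * s ->
  kE * c + kd * c * s + kE * (1 - s) <= kF * (1 - s) * s ->
  0 < a -> 0 < Vn -> 0 <= mux -> (forall y, 0 <= psi y) ->
  \sum_(0 <= y < x.+1) psi y = 1 ->
  Va = Vn * th s c x ->
  ((0 < N)%N -> [/\ Vmp * th s c x = Vn * th s c x.+1,
     Vmm * th s c x = Vn * th s c x.-1,
     Vs * th s c x = Vn &
     (forall y, Vf y * th s c x = Vn * (th s c y * th s c (x - y)))]) ->
  kb * N%:R * (a * Vmp) + kd * N%:R * x%:R * (a * Vmm) + kI * mux * (a * Va)
   + kE * N%:R * (a * Vs) + kF * x%:R * N%:R * \sum_(0 <= y < x.+1) (psi y * (a * Vf y))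
   + a * Vn * kI * (1 - s) * mux
  <= a * Vn * (kb * N%:R * 1 + kd * N%:R * x%:R * 1 + kI * mux * 1 + kE * N%:R * 1
   + kF * x%:R * N%:R * \sum_(0 <= y < x.+1) (psi y * 1)).
Proof.
move=> kb0 kd0 kI0 kE0 kF0 s0 s1 c0 h0 h1 a0 Vn0 mu0 psi0 psum Va_eq HN.
have -> : \sum_(0 <= y < x.+1) (psi y * 1) = 1 by under eq_bigr do rewrite mulr1; exact: psum.
rewrite !mulr1 Va_eq.
have t0 := th_gt0 s0 c0 x.
have tls := th_le x s0 c0.
have kImu : 0 <= kI * mux by rewrite mulr_ge0.
have avn : 0 < a * Vn by rewrite mulr_gt0.
case: N HN => [|N] HN.
  rewrite !mulr0n !mulr0 !mul0r !add0r !addr0.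
  have : 0 <= a * Vn * (kI * mux) * (s - th s c x).
    by rewrite mulr_ge0 ?subr_ge0 // mulr_ge0 // ltW.
  lra.
have [E1 E2 E3 E4] := HN isT.
set t := th s c x in t0 tls E1 E2 E3 E4 *.
have tn0 : t != 0 by rewrite gt_eqF.
have -> : Vmp = Vn * th s c x.+1 / t by rewrite -E1 mulfK.
have -> : Vmm = Vn * th s c x.-1 / t by rewrite -E2 mulfK.
have -> : Vs = Vn / t by rewrite -E3 mulfK.
pose P := \sum_(0 <= y < x.+1) (psi y * (th s c y * th s c (x - y))).
have EP : \sum_(0 <= y < x.+1) (psi y * (a * Vf y)) = a * Vn / t * P.
  rewrite /P big_distrr; apply: eq_bigr => y _.
  have -> : Vf y = Vn * (th s c y * th s c (x - y)) / t by rewrite -E4 mulfK.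
  by rewrite /=; field.
rewrite EP.
have PG : P <= s * t.
  rewrite /P -[X in _ <= X]mul1r -psum big_distrl /=.
  rewrite big_nat_cond [X in _ <= X]big_nat_cond; apply: ler_sum => y /andP[/andP[_ yx] _].
  apply: ler_wpM2l => //.
  by rewrite /t th_prod.
have G := G_le0 (x := x) kb0 kd0 kE0 kF0 s0 s1 c0 h0 h1 PG.
rewrite -/t in G.
set G' := _ + _ + _ + _ in G.
rewrite -subr_ge0.
have key : a * Vn * (kb * N.+1%:R + kd * N.+1%:R * x%:R + kI * mux + kE * N.+1%:R + kF * x%:R * N.+1%:R) -
  (kb * N.+1%:R * (a * (Vn * th s c x.+1 / t)) + kd * N.+1%:R * x%:R * (a * (Vn * th s c x.-1 / t)) +
   kI * mux * (a * (Vn * t)) + kE * N.+1%:R * (a * (Vn / t)) + kF * x%:R * N.+1%:R * (a * Vn / t * P) +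
   a * Vn * kI * (1 - s) * mux) = a * Vn / t * N.+1%:R * (- G') + a * Vn * (kI * mux) * (s - t).
  by rewrite /G'; field.
rewrite key; apply: addr_ge0.
  by rewrite mulr_ge0 ?oppr_ge0 // mulr_ge0 // divr_ge0 // ltW.
by rewrite mulr_ge0 ?subr_ge0 // mulr_ge0 // ltW.
Qed.
Section Main.
Variable R : realType.
Variables (kb kd kI kE kF kC : R) (mu : nat -> R) (psi : nat -> nat -> R).
Hypotheses (kb0 : 0 <= kb) (kd0 : 0 <= kd) (kI0 : 0 <= kI) (kE0 : 0 <= kE)
  (kF0 : 0 <= kF) (kC0 : 0 <= kC) (mu0 : forall x, 0 <= mu x)
  (psi0 : forall x y, 0 <= psi x y).
Hypothesis mu1 : (\sum_(0 <= x <oo) (mu x)%:E = 1)%E.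
Hypothesis psiz : forall x y, (x < y)%N -> psi x y = 0.
Hypothesis psi1 : forall x, (\sum_(0 <= y <oo) (psi x y)%:E = 1)%E.
Hypothesis hC : kC = 0.

Local Notation T := (T kb kd kI kE kF kC mu psi).
Local Notation rate_sum := (rate_sum kb kd kI kE kF kC mu psi).
Local Notation total_rate := (total_rate kb kd kI kE kF kC mu psi).
Local Notation jump := (jump kb kd kI kE kF kC mu psi).

Lemma rate_sum_ge0 V n : (forall m, (0 <= V m)%E) -> (0 <= rate_sum V n)%E.
Proof.
move=> V0; rewrite rate_sumE; apply: nneseries_ge0 => x _ _.
exact: T_ge0.
Qed.

Lemma jump_ge0 V n : (forall m, (0 <= V m)%E) -> (0 <= jump V n)%E.
Proof.
move=> V0; rewrite /jump; case: ifP => _ //.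
rewrite mule_ge0 ?rate_sum_ge0 // lee_fin invr_ge0 fine_ge0 //.
by apply: rate_sum_ge0 => m; rewrite lee01.
Qed.

Lemma jump_mono V1 V2 n : (forall m, (0 <= V1 m)%E) ->
  (forall m, fin_supp m -> (V1 m <= V2 m)%E) -> fin_supp n ->
  (jump V1 n <= jump V2 n)%E.
Proof.
move=> V0 V12 fn; rewrite /jump; case: ifP => _; first exact: V12.
apply: lee_wpmul2r.
  by rewrite lee_fin invr_ge0 fine_ge0 //; apply: rate_sum_ge0 => m; rewrite lee01.
rewrite !rate_sumE; apply: lee_nneseries.
  by move=> x _ _; apply: (T_ge0 kb0 kd0 kI0 kE0 kF0 kC0 mu0 psi0).
by move=> x _; apply: (T_mono kb0 kd0 kI0 kE0 kF0 kC0 mu0 psi0).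
Qed.

Variables (s c : R).
Hypotheses (s0 : 0 < s) (s1 : s < 1) (c0 : 0 < c).
Hypothesis h0 : kE * (1 - s) * (1 + c) <= kb * c * s.
Hypothesis h1 : kE * c + kd * c * s + kE * (1 - s) <= kF * (1 - s) * s.

Lemma gen_ineq a n : 0 < a -> fin_supp n ->
  (rate_sum (fun m => (a * V s c m)%:E) n + (a * V s c n * kI * (1 - s))%:E
    <= (a * V s c n)%:E * total_rate n)%E.
Proof.
move=> a0 fn.
have Vn0 := V_gt0 s0 c0 n.
rewrite /total_rate !rate_sumE.
have T1 x : (0 <= T (fun _ => 1%E) n x)%E by apply: (T_ge0 kb0 kd0 kI0 kE0 kF0 kC0 mu0 psi0) => m; rewrite lee01.
rewrite -nneseriesZl; last by move=> x _; apply: T1.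
have -> : ((a * V s c n * kI * (1 - s))%:E =
    \sum_(0 <= x <oo) ((a * V s c n * kI * (1 - s))%:E * (mu x)%:E))%E.
  by rewrite nneseriesZl ?mu1 ?mule1 // => x _; rewrite lee_fin.
rewrite -nneseriesD; last 2 first.
- by move=> x _ _; apply: (T_ge0 kb0 kd0 kI0 kE0 kF0 kC0 mu0 psi0) => m; rewrite lee_fin mulr_ge0 // ltW // V_gt0.
- move=> x _ _; rewrite lee_fin mulr_ge0 // mulr_ge0 ?subr_ge0 ?(ltW s1) //.
  by rewrite mulr_ge0 // mulr_ge0 // ltW.
apply: lee_nneseries.
  move=> x _ _; apply: adde_ge0; first by apply: (T_ge0 kb0 kd0 kI0 kE0 kF0 kC0 mu0 psi0) => m; rewrite lee_fin mulr_ge0 // ltW // V_gt0.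
  rewrite lee_fin mulr_ge0 // mulr_ge0 ?subr_ge0 ?(ltW s1) //.
  by rewrite mulr_ge0 // mulr_ge0 // ltW.
move=> x _.
rewrite (@T_real _ kb kd kI kE kF kC mu psi psi0 (fun m => a * V s c m)) //; last first.
  by move=> m; rewrite mulr_ge0 // ltW // V_gt0.
rewrite (@T_real _ kb kd kI kE kF kC mu psi psi0 (fun _ => 1)) //.
rewrite -EFinM -EFinD lee_fin /=.
have psum : \sum_(0 <= y < x.+1) psi x y = 1.
  apply: EFin_inj; rewrite -(psi1 x) (@eseries_fin _ (psi x) x.+1) //. exact: psiz.
apply: (@term_ineq _ kb kd kI kE kF s c a (V s c n) _ _ _ _ (mu x) (psi x)
   (fun y => V s c (frag n x y))) => //.
- exact: V_add1.
move=> nx; split.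
- exact: V_move.
- exact: V_move.
- exact: V_sub1.
- by move=> y; apply: V_frag.
Qed.

Hypothesis kIp : 0 < kI.

Lemma jump_lt a n : 0 < a -> fin_supp n ->
  (jump (fun m => (a * V s c m)%:E) n < (a * V s c n)%:E)%E.
Proof.
move=> a0 fn; have H := gen_ineq a0 fn.
have Vn0 := V_gt0 s0 c0 n.
have rs0 : (0 <= rate_sum (fun m => (a * V s c m)%:E) n)%E.
  by apply: rate_sum_ge0 => m; rewrite lee_fin mulr_ge0 // ltW // V_gt0.
have tot0 : (0 <= total_rate n)%E by apply: rate_sum_ge0 => m; rewrite lee01.
have p0 : 0 < a * V s c n * kI * (1 - s) by rewrite !mulr_gt0 // subr_gt0.
have vn0 : 0 < a * V s c n by rewrite mulr_gt0.
rewrite /jump.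
move: H rs0 tot0; rewrite /total_rate.
case: (rate_sum (fun=> 1%E) n) => [r| |] //=; last first.
  by move=> _ _ _; rewrite invr0 mule0 lte_fin.
case: (rate_sum (fun m => (a * V s c m)%:E) n) => [q| |] //=.
- rewrite !lee_fin => H q0 r0.
  rewrite eqe; case: eqP => [r00|rn0].
    by move: H; rewrite r00 mulr0 => H; exfalso; lra.
  have rp : 0 < r by rewrite lt_def r0 andbT; apply/eqP.
  rewrite -EFinM lte_fin ltr_pdivrMr //.
  have : q < a * V s c n * r by lra.
  done.
Qed.

End Main.
Unset Implicit Arguments.
Theorem proposition4p7 (R : realType) (kb kd kI kE kF kC : R)
  (mu : nat -> R) (psi : nat -> nat -> R) :
  0 <= kb -> 0 <= kd -> 0 <= kI -> 0 <= kE -> 0 <= kF -> 0 <= kC ->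
  (forall x, 0 <= mu x) ->
  (\sum_(0 <= x <oo) (mu x)%:E = 1)%E ->
  (\sum_(0 <= x <oo) (x%:R * mu x)%:E < +oo)%E ->
  (forall x y, 0 <= psi x y) ->
  (forall x y, (x < y)%N -> psi x y = 0) ->
  (forall x, \sum_(0 <= y <oo) (psi x y)%:E = 1)%E ->
  (kE + kd) * kE < (kF - kE) * kb ->
  0 < kI ->
  kC = 0 ->
  forall n : nat -> nat, fin_supp n ->
    transient kb kd kI kE kF kC mu psi n.
Proof.
move=> kb0 kd0 kI0 kE0 kF0 kC0 mu0 mu1 _ psi0 psiz psi1 hcond kIp hC n fn.
have [k [k0 hk1 hk2]] := exists_k kb0 kd0 kE0 kF0 hcond.
have [p [p0 p2 hp1 hp2]] := exists_p kb0 kd0 kE0 kF0 k0 hk1 hk2.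
have s0 : 0 < 1 - p by lra.
have s1 : 1 - p < 1 by lra.
have c0 : 0 < k * p by rewrite mulr_gt0.
have h0 : kE * (1 - (1 - p)) * (1 + k * p) <= kb * (k * p) * (1 - p).
  have := ler_wpM2l (ltW p0) hp1; nra.
have h1 : kE * (k * p) + kd * (k * p) * (1 - p) + kE * (1 - (1 - p))
    <= kF * (1 - (1 - p)) * (1 - p).
  have := ler_wpM2l (ltW p0) hp2.
  have : 0 <= kd * k * p * p by rewrite !mulr_ge0 // ltW.
  nra.
set s := 1 - p in s0 s1 h0 h1.
set c := k * p in c0 h0 h1.
have Vn0 := V_gt0 s0 c0 n.
set a := (V s c n)^-1.
have a0 : 0 < a by rewrite invr_gt0.
have aV : a * V s c n = 1 by rewrite mulVf // gt_eqF.
have JL := jump_lt kb0 kd0 kI0 kE0 kF0 kC0 mu0 psi0 mu1 psiz psi1 hC s0 s1 c0 h0 h1 kIp a0.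
have JM := jump_mono kb0 kd0 kI0 kE0 kF0 kC0 mu0 psi0.
have JG := jump_ge0 kb0 kd0 kI0 kE0 kF0 kC0 mu0 psi0.
pose W := fun m => (a * V s c m)%:E.
have W0 m : (0 <= W m)%E by rewrite lee_fin mulr_ge0 // ltW // V_gt0.
have hit0 j m : (0 <= hit kb kd kI kE kF kC mu psi n j m)%E.
  elim: j m => [|j IH] m /=; case: ifP => _ //; rewrite ?lee01 //.
  exact: JG.
have hitle j m : fin_supp m -> (hit kb kd kI kE kF kC mu psi n j m <= W m)%E.
  elim: j m => [|j IH] m fm /=; case: asboolP => [->|_];
    rewrite ?/W ?aV ?lexx //.
    by rewrite lee_fin mulr_ge0 // ltW // V_gt0.
  apply: le_trans (ltW (JL _ fm)).
  exact: JM.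
rewrite /transient.
apply: (@le_lt_trans _ _ (jump kb kd kI kE kF kC mu psi W n)); last first.
  by have := JL _ fn; rewrite aV.
apply: ge_ereal_sup => _ [j _ <-]; rewrite /ret.
exact: (JM _ _ _ (hit0 j) (hitle j) fn).
Qed.
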